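(* Let $(\mathcal{M},\times,1)$ be a cartesian monoidal category with equivalences. Then there is an isomorphism of categories \[ \mathrm{HtyAlg}(\mathbf{CMon},\mathcal{M})\;\cong\;\mathbf{Special}(\Gamma^{\mathrm{op}},\mathcal{M}). \]
   Context: A monoidal category with equivalences is a monoidal category with a class of morphisms (equivalences) containing all isomorphisms, satisfying two-out-of-three under composition, and closed under $\otimes$; cartesian means the monoidal structure is given by chosen finite products. $\Phi$: objects $n=\{0,\dots,n-1\}$ ($n\ge0$), all functions, symmetric monoidal under disjoint union $+$ with unit $0$. $\mathrm{HtyAlg}(\mathbf{CMon},\mathcal{M})$ (homotopy commutative monoids in $\mathcal{M}$) is the category whose objects are colax symmetric monoidal functors $(X,\xi):(\Phi,+,0)\to(\mathcal{M},\times,1)$ (a functor $X$ with natural maps $\xi_{m,n}:X(m+n)\to X(m)\times X(n)$ and $\xi_0:X(0)\to1$ satisfying coassociativity, counit and symmetry axioms, not necessarily invertible) in which $\xi_0$ and all $\xi_{m,n}$ are equivalences, and whose morphisms are monoidal transformations (natural transformations $\sigma$ compatible with the $\xi$'s: $\xi'_{m,n}\sigma_{m+n}=(\sigma_m\times\sigma_n)\xi_{m,n}$, $\xi'_0\sigma_0=\xi_0$). $\Gamma^{\mathrm{op}}$: objects $[n]=\{0,\dots,n\}$, morphisms basepoint-preserving functions. A special $\Gamma$-object in $\mathcal{M}$ is a functor $Y:\Gamma^{\mathrm{op}}\to\mathcal{M}$ such that for every $n\ge0$ the map $(Y(\rho^n_0),\dots,Y(\rho^n_{n-1})):Y[n]\to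 Y[1]^n$ is an equivalence, where $\rho^n_j:[n]\to[1]$ sends $j+1$ to $1$ and everything else to $0$ (equivalently: for all $m,n$ the map $(Y(\pi^1_{m,n}),Y(\pi^2_{m,n})):Y[m+n]\to Y[m]\times Y[n]$ and $Y[0]\to1$ are equivalences, with $\pi^1_{m,n}$ collapsing $m+1,\dots,m+n$ to $0$ and fixing $0,\dots,m$, and $\pi^2_{m,n}$ collapsing $0,\dots,m$ to $0$ and sending $i>m$ to $i-m$). $\mathbf{Special}(\Gamma^{\mathrm{op}},\mathcal{M})$ is the category of special $\Gamma$-objects and natural transformations. *)

(* Defs.v *)
From mathcomp Require Import all_boot.
Set Implicit Arguments.
Unset Strict Implicit.
Unset Printing Implicit Defensive.

Record Cat := {
  Ob :> Type;
  Hom : Ob -> Ob -> Type;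
  idm : forall a, Hom a a;
  cmp : forall a b c, Hom b c -> Hom a b -> Hom a c;
  cmp_idl : forall a b (f : Hom a b), cmp (idm b) f = f;
  cmp_idr : forall a b (f : Hom a b), cmp f (idm a) = f;
  cmp_assoc : forall a b c d (h : Hom c d) (g : Hom b c) (f : Hom a b),
      cmp h (cmp g f) = cmp (cmp h g) f }.
Arguments Hom {C} a b : rename.
Arguments idm {C} a : rename.
Arguments cmp {C a b c} g f : rename.

Definition is_iso (C : Cat) (a b : C) (f : Hom a b) : Prop :=
  exists g : Hom b a, cmp g f = idm a /\ cmp f g = idm b.

(* monoidal structure = chosen finite products (terminal object [one],
   binary products [prd] with projections and pairing);
   [equiv] = the class of equivalences. *)
Record CartEqCat := {
  cat :> Cat;
  one : cat;
  bang : forall a : cat, Hom a one;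
  bang_uniq : forall (a : cat) (f : Hom a one), f = bang a;
  prd : cat -> cat -> cat;
  pr1 : forall a b : cat, Hom (prd a b) a;
  pr2 : forall a b : cat, Hom (prd a b) b;
  pair : forall c a b : cat, Hom c a -> Hom c b -> Hom c (prd a b);
  pair_pr1 : forall (c a b : cat) (f : Hom c a) (g : Hom c b),
      cmp (pr1 a b) (pair f g) = f;
  pair_pr2 : forall (c a b : cat) (f : Hom c a) (g : Hom c b),
      cmp (pr2 a b) (pair f g) = g;
  pair_uniq : forall (c a b : cat) (h : Hom c (prd a b)),
      h = pair (cmp (pr1 a b) h) (cmp (pr2 a b) h);
  equiv : forall a b : cat, Hom a b -> Prop;
  equiv_iso : forall (a b : cat) (f : Hom a b), is_iso f -> equiv f;
  equiv_comp : forall (a b c : cat) (f : Hom a b) (g : Hom b c),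
      equiv f -> equiv g -> equiv (cmp g f);
  equiv_2of3_l : forall (a b c : cat) (f : Hom a b) (g : Hom b c),
      equiv (cmp g f) -> equiv g -> equiv f;
  equiv_2of3_r : forall (a b c : cat) (f : Hom a b) (g : Hom b c),
      equiv (cmp g f) -> equiv f -> equiv g;
  equiv_prod : forall (a b a' b' : cat) (f : Hom a a') (g : Hom b b'),
      equiv f -> equiv g -> equiv (pair (cmp f (pr1 a b)) (cmp g (pr2 a b))) }.
Arguments one {M} : rename.
Arguments bang {M} a : rename.
Arguments prd {M} a b : rename.
Arguments pr1 {M a b} : rename.
Arguments pr2 {M a b} : rename.
Arguments pair {M c a b} f g : rename.
Arguments equiv {M a b} f : rename.

Section CartOps.
Variable M : CartEqCat.
Definition fprod (a b a' b' : M) (f : Hom a a') (g : Hom b b') :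
  Hom (prd a b) (prd a' b') := pair (cmp f pr1) (cmp g pr2).
Definition assocM (a b c : M) : Hom (prd (prd a b) c) (prd a (prd b c)) :=
  pair (cmp pr1 pr1) (pair (cmp pr2 pr1) pr2).
Definition swapM (a b : M) : Hom (prd a b) (prd b a) := pair pr2 pr1.
Fixpoint pw (a : M) (n : nat) : M :=
  match n with 0 => one | k.+1 => prd a (pw a k) end.
Fixpoint tup (b a : M) (n : nat) : ('I_n -> Hom b a) -> Hom b (pw a n) :=
  match n return ('I_n -> Hom b a) -> Hom b (pw a n) with
  | 0 => fun _ => bang b
  | k.+1 => fun fs => pair (fs ord0) (@tup b a k (fun j => fs (lift ord0 j)))
  end.
End CartOps.

(* ---------- The category Phi (objects n = 'I_n, all functions, +) ---------- *)
Definition phi_sum m m' n n' (f : 'I_m -> 'I_m') (g : 'I_n -> 'I_n') :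
  'I_(m + n) -> 'I_(m' + n') :=
  fun i => match split i with inl a => lshift n' (f a) | inr b => rshift m' (g b) end.
Definition phi_assoc l m n : 'I_(l + m + n) -> 'I_(l + (m + n)) :=
  cast_ord (esym (addnA l m n)).
Definition phi_lunit n : 'I_(0 + n) -> 'I_n := cast_ord (add0n n).
Definition phi_runit n : 'I_(n + 0) -> 'I_n := cast_ord (addn0 n).
Definition phi_swap m n : 'I_(m + n) -> 'I_(n + m) :=
  fun i => match split i with inl a => rshift n a | inr b => lshift m b end.

Record HtyAlgOb (M : CartEqCat) := {
  hX :> nat -> M;
  hXmap : forall m n, ('I_m -> 'I_n) -> Hom (hX m) (hX n);
  hX_id : forall n, hXmap (fun i : 'I_n => i) = idm (hX n);
  hX_comp : forall l m n (f : 'I_l -> 'I_m) (g : 'I_m -> 'I_n),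
      hXmap (g \o f) = cmp (hXmap g) (hXmap f);
  xi : forall m n, Hom (hX (m + n)) (prd (hX m) (hX n));
  xi0 : Hom (hX 0) one;
  xi_nat : forall m m' n n' (f : 'I_m -> 'I_m') (g : 'I_n -> 'I_n'),
      cmp (xi m' n') (hXmap (phi_sum f g)) = cmp (fprod (hXmap f) (hXmap g)) (xi m n);
  xi_coassoc : forall l m n,
      cmp (assocM _ _ _) (cmp (fprod (xi l m) (idm _)) (xi (l + m) n))
      = cmp (fprod (idm _) (xi m n)) (cmp (xi l (m + n)) (hXmap (@phi_assoc l m n)));
  xi_lunit : forall n,
      cmp pr2 (cmp (fprod xi0 (idm _)) (xi 0 n)) = hXmap (@phi_lunit n);
  xi_runit : forall n,
      cmp pr1 (cmp (fprod (idm _) xi0) (xi n 0)) = hXmap (@phi_runit n);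
  xi_sym : forall m n, cmp (swapM _ _) (xi m n) = cmp (xi n m) (hXmap (@phi_swap m n));
  xi_equiv : forall m n, equiv (xi m n);
  xi0_equiv : equiv xi0 }.
Arguments hXmap {M} X {m n} f : rename.
Arguments xi {M} X m n : rename.
Arguments xi0 {M} X : rename.

Record HtyAlgHom (M : CartEqCat) (X Y : HtyAlgOb M) := {
  hsig :> forall n, Hom (X n) (Y n);
  hsig_nat : forall m n (f : 'I_m -> 'I_n),
      cmp (hXmap Y f) (hsig m) = cmp (hsig n) (hXmap X f);
  hsig_xi : forall m n,
      cmp (xi Y m n) (hsig (m + n)) = cmp (fprod (hsig m) (hsig n)) (xi X m n);
  hsig_xi0 : cmp (xi0 Y) (hsig 0) = xi0 X }.

(* ---------- Gamma^op: objects [n] = 'I_n.+1, basepoint-preserving maps ---------- *)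
Record GMap m n := { gfun :> 'I_m.+1 -> 'I_n.+1; gfun0 : gfun ord0 = ord0 }.

Definition gid n : GMap n n := {| gfun := id; gfun0 := erefl |}.
Lemma gcomp0 l m n (g : GMap m n) (f : GMap l m) : (g \o f) ord0 = ord0.
Proof. by rewrite /= !gfun0. Qed.
Definition gcomp l m n (g : GMap m n) (f : GMap l m) : GMap l n :=
  {| gfun := g \o f; gfun0 := gcomp0 g f |}.

Definition rho_fun n (j : 'I_n) : 'I_n.+1 -> 'I_2 :=
  fun i => if val i == j.+1 then ord_max else ord0.
Lemma rho_fun0 n (j : 'I_n) : rho_fun j ord0 = ord0.
Proof. by []. Qed.
Definition rho n (j : 'I_n) : GMap n 1 := {| gfun := rho_fun j; gfun0 := rho_fun0 j |}.

Record SpecialOb (M : CartEqCat) := {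
  sY :> nat -> M;
  sYmap : forall m n, GMap m n -> Hom (sY m) (sY n);
  sY_id : forall n, sYmap (gid n) = idm (sY n);
  sY_comp : forall l m n (f : GMap l m) (g : GMap m n),
      sYmap (gcomp g f) = cmp (sYmap g) (sYmap f);
  sY_special : forall n, equiv (tup (fun j : 'I_n => sYmap (rho j))) }.
Arguments sYmap {M} Y {m n} f : rename.

Record SpecialHom (M : CartEqCat) (X Y : SpecialOb M) := {
  ssig :> forall n, Hom (X n) (Y n);
  ssig_nat : forall m n (f : GMap m n),
      cmp (sYmap Y f) (ssig m) = cmp (ssig n) (sYmap X f) }.

(* Main.v *)
From Stdlib Require Import ProofIrrelevance FunctionalExtensionality.
Require Import Defs.
From mathcomp Require Import all_boot zify.
Set Implicit Arguments.
Unset Strict Implicit.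
Unset Printing Implicit Defensive.
Local Notation fprod := Defs.fprod.
Local Notation pair := Defs.pair.
Local Notation equiv := Defs.equiv.
Local Notation one := Defs.one.

Section Cart.
Variable M : CartEqCat.

Lemma pair_cmp (c d a b : M) (f : Hom c a) (g : Hom c b) (h : Hom d c) :
  cmp (pair f g) h = pair (cmp f h) (cmp g h).
Proof.
by rewrite (pair_uniq (cmp (pair f g) h)) !cmp_assoc pair_pr1 pair_pr2.
Qed.

Lemma pair_ext (c a b : M) (h h' : Hom c (prd a b)) :
  cmp pr1 h = cmp pr1 h' -> cmp pr2 h = cmp pr2 h' -> h = h'.
Proof. by move=> e1 e2; rewrite (pair_uniq h) (pair_uniq h') e1 e2. Qed.

Lemma pr1_fprod (a b a' b' : M) (f : Hom a a') (g : Hom b b') :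
  cmp pr1 (fprod f g) = cmp f pr1.
Proof. exact: pair_pr1. Qed.
Lemma pr2_fprod (a b a' b' : M) (f : Hom a a') (g : Hom b b') :
  cmp pr2 (fprod f g) = cmp g pr2.
Proof. exact: pair_pr2. Qed.

Lemma pr1_fprodC (c a b a' b' : M) (f : Hom a a') (g : Hom b b') (h : Hom c _) :
  cmp pr1 (cmp (fprod f g) h) = cmp f (cmp pr1 h).
Proof. by rewrite cmp_assoc pr1_fprod -cmp_assoc. Qed.
Lemma pr2_fprodC (c a b a' b' : M) (f : Hom a a') (g : Hom b b') (h : Hom c _) :
  cmp pr2 (cmp (fprod f g) h) = cmp g (cmp pr2 h).
Proof. by rewrite cmp_assoc pr2_fprod -cmp_assoc. Qed.
Lemma pr1_pairC (d c a b : M) (f : Hom c a) (g : Hom c b) (h : Hom d c) :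
  cmp pr1 (cmp (pair f g) h) = cmp f h.
Proof. by rewrite cmp_assoc pair_pr1. Qed.
Lemma pr2_pairC (d c a b : M) (f : Hom c a) (g : Hom c b) (h : Hom d c) :
  cmp pr2 (cmp (pair f g) h) = cmp g h.
Proof. by rewrite cmp_assoc pair_pr2. Qed.

Lemma fprod_pair (c a b a' b' : M) (f : Hom a a') (g : Hom b b') (u : Hom c a) (v : Hom c b) :
  cmp (fprod f g) (pair u v) = pair (cmp f u) (cmp g v).
Proof. by rewrite /fprod pair_cmp -!cmp_assoc pair_pr1 pair_pr2. Qed.

Lemma iso_equiv_id (a : M) : equiv (idm a).
Proof. apply: equiv_iso; exists (idm a); by rewrite cmp_idl. Qed.

Ltac csimp := repeat progress (rewrite ?pair_cmp -?cmp_assoc ?pair_pr1 ?pair_pr2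
   ?pr1_pairC ?pr2_pairC ?pr1_fprod ?pr2_fprod ?pr1_fprodC ?pr2_fprodC ?cmp_idl ?cmp_idr /=).
Ltac pext := repeat (first [done | apply: pair_ext; csimp]).

Lemma assoc_iso (a b c : M) : is_iso (assocM a b c).
Proof.
exists (pair (pair pr1 (cmp pr1 pr2)) (cmp pr2 pr2)); rewrite /assocM; split; pext.
Qed.

Lemma pr2_one_iso (a : M) : is_iso (@pr2 M one a).
Proof.
exists (pair (bang a) (idm a)); split.
- apply: pair_ext; rewrite cmp_idr.
  + by rewrite (bang_uniq (cmp pr1 _)) (bang_uniq pr1).
  + by rewrite pr2_pairC cmp_idl.
- by rewrite pair_pr2.
Qed.

Lemma tup_cmp (b' b a : M) n (g : 'I_n -> Hom b a) (h : Hom b' b) :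
  tup (fun j => cmp (g j) h) = cmp (tup g) h.
Proof.
elim: n g => [|n IH] g /=; first by rewrite (bang_uniq (cmp _ _)).
by rewrite pair_cmp -IH.
Qed.


Definition lastI n : 'I_(n+1) := @Ordinal (n+1) n (ltac:(by rewrite addn1)).
Definition lsh n : 'I_n -> 'I_(n+1) := fun i => lshift 1 i.
Definition col a b : 'I_(a+b) -> 'I_(a+1) := phi_sum (fun i => i) (fun _ : 'I_b => (ord0 : 'I_1)).
Definition kl k n m (u : 'I_k -> 'I_(n+1)) (v : 'I_m -> 'I_(k+1)) : 'I_m -> 'I_(n+1) :=
  (@col n (1+1) \o @phi_assoc n 1 1) \o (phi_sum u (fun i : 'I_1 => i) \o v).
Definition fh m n (f : GMap m n) : 'I_m -> 'I_(n+1) := fun i =>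
  insubd (lastI n) (if nat_of_ord (f (lift ord0 i)) == 0 then n else nat_of_ord (f (lift ord0 i)) - 1).

Lemma bump0' i : bump 0 i = i.+1. Proof. by []. Qed.

Lemma ord_inj n (a b : 'I_n) : nat_of_ord a = nat_of_ord b -> a = b.
Proof. exact: val_inj. Qed.

Lemma val_col a b (i : 'I_(a+b)) : nat_of_ord (@col a b i) = if i < a then nat_of_ord i else a.
Proof.
rewrite /col /phi_sum; case: splitP => [j|k] /= e; [rewrite e; exact: erefl | lia].
Qed.

Lemma val_kl_lo k n m (u : 'I_k -> 'I_(n+1)) (v : 'I_m -> 'I_(k+1)) i (j : 'I_k) :
  nat_of_ord (v i) = nat_of_ord j -> nat_of_ord (kl u v i) = nat_of_ord (u j).
Proof.
move=> e; rewrite /kl /= val_col /phi_assoc /= /phi_sum.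
case: splitP => [j' /= e' | k' /= e']; last by have := ltn_ord j; lia.
have -> : j' = j by apply: ord_inj; rewrite -e' e.
have := ltn_ord (u j); case: ifP => h /= hlt; lia.
Qed.

Lemma val_kl_hi k n m (u : 'I_k -> 'I_(n+1)) (v : 'I_m -> 'I_(k+1)) i :
  k <= nat_of_ord (v i) -> nat_of_ord (kl u v i) = n.
Proof.
move=> e; rewrite /kl /= val_col /phi_assoc /= /phi_sum.
case: splitP => [j' /= e' | k' /= e']; first by have := ltn_ord j'; lia.
case: ifP => h /=; lia.
Qed.

Lemma val_fh m n (f : GMap m n) i :
  nat_of_ord (fh f i) = if nat_of_ord (f (lift ord0 i)) == 0 then n else nat_of_ord (f (lift ord0 i)) - 1.
Proof.
rewrite /fh val_insubd; case: ifP => // /negbT; have := ltn_ord (f (lift ord0 i)).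
case: eqP => _ /=; lia.
Qed.

Lemma fh_gid n : fh (gid n) =1 @lsh n.
Proof. move=> i; apply: ord_inj; rewrite val_fh /= bump0' /=; lia. Qed.

Lemma fh_gcomp l m n (f : GMap l m) (g : GMap m n) : fh (gcomp g f) =1 kl (fh g) (fh f).
Proof.
move=> i; apply: ord_inj; rewrite val_fh /=.
case: (eqVneq (nat_of_ord (f (lift ord0 i))) 0) => e.
  have -> : f (lift ord0 i) = ord0 by apply: ord_inj.
  rewrite gfun0 /= val_kl_hi // val_fh e /=; lia.
have hlt : nat_of_ord (f (lift ord0 i)) - 1 < m by have := ltn_ord (f (lift ord0 i)); lia.
rewrite (@val_kl_lo _ _ _ _ _ _ (Ordinal hlt)); last by rewrite val_fh (negbTE e).
rewrite val_fh; have -> // : lift ord0 (Ordinal hlt) = f (lift ord0 i).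
by apply: ord_inj; rewrite lift0 /=; lia.
Qed.

Lemma val_rho n (j : 'I_n) i : nat_of_ord (rho j i) = (nat_of_ord i == j.+1).
Proof. by rewrite /= /rho_fun; case: eqP. Qed.

Lemma val_swap m n (i : 'I_(m+n)) :
  nat_of_ord (@phi_swap m n i) = if i < m then n + i else i - m.
Proof. rewrite /phi_swap; case: splitP => [j|k] /= e; lia. Qed.

Lemma fh_rho0 n : fh (@rho n.+1 ord0) =1 @col 1 n.
Proof.
move=> i; apply: ord_inj; rewrite val_fh val_rho val_col /= bump0'.
case: i => [[|k] hk] /=; lia.
Qed.

Lemma fh_rhoS n (j : 'I_n) : fh (@rho n.+1 (lift ord0 j)) =1 kl (fh (rho j)) (@phi_swap 1 n).
Proof.
move=> i; apply: ord_inj; rewrite val_fh val_rho /= !bump0'.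
case: (ltnP i 1) => h.
  rewrite val_kl_hi ?val_swap ?h; last by lia.
  case: eqP => /= e; lia.
have hlt : i - 1 < n by have := ltn_ord i; lia.
rewrite (@val_kl_lo _ _ _ _ _ _ (Ordinal hlt)); last by rewrite val_swap ltnNge h.
rewrite val_fh val_rho /= !bump0'.
have -> : ((i - 1).+1 == j.+1) = (i.+1 == j.+2) by apply/idP/idP => /eqP e; apply/eqP; lia.
exact: erefl.
Qed.

Section FromHty.
Variable X : HtyAlgOb M.
Local Notation Xm := (hXmap X).
Definition P a b : Hom (X (a+b)) (X a) := locked (cmp pr1 (xi X a b)).
Lemma PE a b : P a b = cmp pr1 (xi X a b). Proof. by rewrite /P -lock. Qed.
Definition r n : Hom (X (n+1)) (X n) := P n 1.

Lemma Xext m n (f g : 'I_m -> 'I_n) : f =1 g -> Xm f = Xm g.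
Proof. by move=> e; rewrite (functional_extensionality _ _ e). Qed.

Lemma P_nat a b a' b' (f : 'I_a -> 'I_a') (g : 'I_b -> 'I_b') :
  cmp (P a' b') (Xm (phi_sum f g)) = cmp (Xm f) (P a b).
Proof. by rewrite !PE -cmp_assoc xi_nat pr1_fprodC. Qed.

Lemma P_col a b : P a b = cmp (r a) (Xm (@col a b)).
Proof. by rewrite /r /col P_nat hX_id cmp_idl. Qed.

Lemma Q_swap a b : cmp pr2 (xi X a b) = cmp (P b a) (Xm (@phi_swap a b)).
Proof. by rewrite PE -cmp_assoc -xi_sym cmp_assoc /swapM pair_pr1. Qed.

Lemma rr n : cmp (r n) (r (n+1)) = cmp (r n) (Xm (@col n (1+1) \o @phi_assoc n 1 1)).
Proof.
have e := f_equal (cmp pr1) (xi_coassoc X n 1 1).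
move: e; rewrite /assocM; csimp => e.
rewrite /r !PE; csimp; rewrite e cmp_assoc -PE P_col (hX_comp X (@phi_assoc n 1 1) (@col n (1+1))).
by rewrite /r PE; csimp.
Qed.

Lemma r_lsh n : cmp (r n) (Xm (@lsh n)) = idm (X n).
Proof.
have e : cmp (r n) (Xm (@col n 0)) = Xm (@phi_runit n).
  by rewrite -P_col PE -(xi_runit X n) pr1_fprodC cmp_idl.
rewrite (@Xext _ _ (lsh (n:=n)) (@col n 0 \o cast_ord (esym (addn0 n)))); last first.
  move=> i; apply: ord_inj; rewrite /= /lsh /col /phi_sum /=.
  case: splitP => [j /= -> | k /=]; first by [].
  move=> h; have := ltn_ord i; lia.
rewrite (hX_comp X (cast_ord (esym (addn0 n))) (@col n 0)) cmp_assoc e.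
rewrite -(hX_comp X (cast_ord (esym (addn0 n))) (@phi_runit n)) -hX_id.
apply: Xext => i; apply: ord_inj; exact: erefl.
Qed.

Lemma KL k n m (u : 'I_k -> 'I_(n+1)) (v : 'I_m -> 'I_(k+1)) :
  cmp (cmp (r n) (Xm u)) (cmp (r k) (Xm v)) = cmp (r n) (Xm (kl u v)).
Proof.
have e := @P_nat k 1 (n+1) 1 u (fun i => i).
rewrite -/(r k) -/(r (n+1)) in e.
rewrite /kl (hX_comp X (phi_sum u (fun i => i) \o v) (@col n (1+1) \o @phi_assoc n 1 1)).
rewrite (hX_comp X v (phi_sum u (fun i => i))).
rewrite -!cmp_assoc (cmp_assoc (Xm u)) -e -!cmp_assoc (cmp_assoc (r n)) rr -!cmp_assoc.
done.
Qed.

Definition Ymap m n (f : GMap m n) : Hom (X m) (X n) := cmp (r n) (Xm (fh f)).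

Lemma Y_id n : Ymap (gid n) = idm (X n).
Proof. by rewrite /Ymap (Xext (@fh_gid n)) r_lsh. Qed.

Lemma Y_comp l m n (f : GMap l m) (g : GMap m n) :
  Ymap (gcomp g f) = cmp (Ymap g) (Ymap f).
Proof. by rewrite /Ymap KL (Xext (fh_gcomp f g)). Qed.

Lemma Y_rho0 n : Ymap (@rho n.+1 ord0) = P 1 n.
Proof. rewrite /Ymap (Xext (@fh_rho0 n)) P_col; exact: erefl. Qed.

Lemma Y_rhoS n (j : 'I_n) :
  Ymap (@rho n.+1 (lift ord0 j)) = cmp (Ymap (rho j)) (cmp pr2 (xi X 1 n)).
Proof. by rewrite Q_swap /Ymap -/(r n) KL (Xext (fh_rhoS j)). Qed.

Lemma Y_special n : equiv (tup (fun j : 'I_n => Ymap (rho j))).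
Proof.
elim: n => [|n IH] /=.
  by rewrite -(bang_uniq (xi0 X)); exact: xi0_equiv.
rewrite Y_rho0 (functional_extensionality _ _ (@Y_rhoS n)) tup_cmp.
have -> : pair (P 1 n) (cmp (tup (fun j : 'I_n => Ymap (rho j))) (cmp pr2 (xi X 1 n)))
  = cmp (fprod (idm _) (tup (fun j : 'I_n => Ymap (rho j)))) (xi X 1 n).
  by rewrite /fprod pair_cmp -!cmp_assoc cmp_idl PE.
exact: (equiv_comp (xi_equiv X 1 n) (equiv_prod (iso_equiv_id _) IH)).
Qed.

End FromHty.
End Cart.

Ltac csimp := repeat progress (rewrite ?pair_cmp -?cmp_assoc ?pair_pr1 ?pair_pr2
   ?pr1_pairC ?pr2_pairC ?pr1_fprod ?pr2_fprod ?pr1_fprodC ?pr2_fprodC ?cmp_idl ?cmp_idr /=).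
Ltac pext := repeat (first [done | apply: pair_ext; csimp]).

Lemma gmap_eq m n (f g : GMap m n) : (forall i, nat_of_ord (f i) = nat_of_ord (g i)) -> f = g.
Proof.
case: f g => f f0 [g g0] /= e.
have efg : f = g by apply: functional_extensionality => i; apply: ord_inj.
subst g; f_equal; apply: proof_irrelevance.
Qed.

Definition ext_fun m n (f : 'I_m -> 'I_n) : 'I_m.+1 -> 'I_n.+1 :=
  fun i => if unlift ord0 i is Some j then lift ord0 (f j) else ord0.
Lemma ext_fun0 m n (f : 'I_m -> 'I_n) : ext_fun f ord0 = ord0.
Proof. by rewrite /ext_fun unlift_none. Qed.
Definition ext m n (f : 'I_m -> 'I_n) : GMap m n := {| gfun := ext_fun f; gfun0 := ext_fun0 f |}.

Lemma ext_lift m n (f : 'I_m -> 'I_n) j : ext f (lift ord0 j) = lift ord0 (f j).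
Proof. by rewrite /= /ext_fun liftK. Qed.

Lemma val_extP m n (f : 'I_m -> 'I_n) i :
  (nat_of_ord i = 0 /\ nat_of_ord (ext f i) = 0) \/
  exists j : 'I_m, nat_of_ord i = j.+1 /\ nat_of_ord (ext f i) = (f j).+1.
Proof.
case: (unliftP ord0 i) => [j -> | ->]; last by left; rewrite /= ext_fun0.
by right; exists j; rewrite ext_lift !lift0.
Qed.

Definition pi1f m n : 'I_(m+n).+1 -> 'I_m.+1 :=
  fun i => insubd ord0 (if nat_of_ord i <= m then nat_of_ord i else 0).
Arguments pi1f : clear implicits.
Lemma pi1f0 m n : pi1f m n ord0 = ord0.
Proof. by apply: ord_inj; rewrite /pi1f val_insubd /=. Qed.
Definition pi1 m n : GMap (m+n) m := {| gfun := pi1f m n; gfun0 := pi1f0 m n |}.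
Arguments pi1 : clear implicits.
Definition pi2f m n : 'I_(m+n).+1 -> 'I_n.+1 :=
  fun i => insubd ord0 (if m < nat_of_ord i then nat_of_ord i - m else 0).
Arguments pi2f : clear implicits.
Lemma pi2f0 m n : pi2f m n ord0 = ord0.
Proof. by apply: ord_inj; rewrite /pi2f val_insubd /=. Qed.
Definition pi2 m n : GMap (m+n) n := {| gfun := pi2f m n; gfun0 := pi2f0 m n |}.

Arguments pi2 : clear implicits.
Lemma val_pi1 m n i : nat_of_ord (pi1 m n i) = if i <= m then nat_of_ord i else 0.
Proof.
rewrite /= /pi1f val_insubd; case: (leqP i m) => h1 /=; try case: ifP => h2; have := ltn_ord i; lia.
Qed.
Lemma val_pi2 m n i : nat_of_ord (pi2 m n i) = if m < i then nat_of_ord i - m else 0.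
Proof.
rewrite /= /pi2f val_insubd; case: (ltnP m i) => h1 /=; try case: ifP => h2; have := ltn_ord i; lia.
Qed.
Lemma gcompE l m n (g : GMap m n) (f : GMap l m) i : gcomp g f i = g (f i).
Proof. by []. Qed.

Ltac ifs_lia := repeat (match goal with |- context [if ?b then _ else _] =>
  (lazymatch b with context [if _ then _ else _] => fail | _ => case: (boolP b) => ? end) end); lia.
Ltac unify_ords := repeat match goal with
 | |- context [@nat_of_ord ?a ?x] => match goal with |- context [@nat_of_ord ?b x] =>
      assert_fails (constr_eq a b); change (@nat_of_ord b x) with (@nat_of_ord a x) end end.
Ltac fin := unify_ords; intros; ifs_lia.
Ltac gstart := apply: gmap_eq; let i := fresh "i" in intro i; case: (unliftP ord0 i) => [k ->|->]; last by rewrite !gfun0.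
Ltac gstart2 := gstart; match goal with k : 'I__ |- _ => move: (ltn_ord k); cbn [Nat.pred predn] end.

Lemma ext_id n : ext (fun i : 'I_n => i) = gid n.
Proof. gstart; rewrite ext_lift; exact: erefl. Qed.

Lemma ext_comp l m n (f : 'I_l -> 'I_m) (g : 'I_m -> 'I_n) :
  ext (g \o f) = gcomp (ext g) (ext f).
Proof. gstart; rewrite gcompE !ext_lift; exact: erefl. Qed.

Lemma pi1_nat m n m' n' (f : 'I_m -> 'I_m') (g : 'I_n -> 'I_n') :
  gcomp (pi1 m' n') (ext (phi_sum f g)) = gcomp (ext f) (pi1 m n).
Proof.
gstart; rewrite !gcompE ext_lift val_pi1 lift0.
case: (val_extP f (pi1 m n (lift ord0 k))) => [[e1 e2]|[j [e1 e2]]]; rewrite e2;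
  rewrite val_pi1 lift0 in e1; move: e1;
  rewrite /phi_sum; case: splitP => [a|b] /= e.
- have := ltn_ord a; ifs_lia.
- have := ltn_ord (g b); ifs_lia.
- move=> e1; have -> : j = a by apply: ord_inj; move: e1; ifs_lia.
  have := ltn_ord (f a); ifs_lia.
- have := ltn_ord j; ifs_lia.
Qed.
Lemma pi2_nat m n m' n' (f : 'I_m -> 'I_m') (g : 'I_n -> 'I_n') :
  gcomp (pi2 m' n') (ext (phi_sum f g)) = gcomp (ext g) (pi2 m n).
Proof.
gstart; rewrite !gcompE ext_lift val_pi2 lift0.
case: (val_extP g (pi2 m n (lift ord0 k))) => [[e1 e2]|[j [e1 e2]]]; rewrite e2;
  rewrite val_pi2 lift0 in e1; move: e1;
  rewrite /phi_sum; case: splitP => [a|b] /= e.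
- have := ltn_ord (f a); ifs_lia.
- have := ltn_ord b; ifs_lia.
- have := ltn_ord a; ifs_lia.
- move=> e1; have -> : j = b by apply: ord_inj; move: e1; ifs_lia.
  have := ltn_ord (g b); ifs_lia.
Qed.

Lemma cast_val m n (e : m = n) (i : 'I_m) : nat_of_ord (cast_ord e i) = i.
Proof. by []. Qed.

Ltac vsimp := repeat progress rewrite ?gcompE ?ext_lift ?val_pi1 ?val_pi2 ?lift0 ?cast_val.

Lemma co1 l m n : gcomp (pi1 l m) (pi1 (l + m) n) = gcomp (pi1 l (m + n)) (ext (@phi_assoc l m n)).
Proof. gstart; vsimp; ifs_lia. Qed.
Lemma co2 l m n : gcomp (pi2 l m) (pi1 (l + m) n) =
  gcomp (gcomp (pi1 m n) (pi2 l (m + n))) (ext (@phi_assoc l m n)).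
Proof. gstart; vsimp; ifs_lia. Qed.
Lemma co3 l m n : pi2 (l + m) n =
  gcomp (gcomp (pi2 m n) (pi2 l (m + n))) (ext (@phi_assoc l m n)).
Proof. gstart; vsimp; ifs_lia. Qed.

Lemma val_rho' n (j : 'I_n) i : nat_of_ord (rho j i) = if nat_of_ord i == j.+1 then 1 else 0.
Proof. by rewrite val_rho; case: eqP. Qed.

Lemma val_ord0 n : nat_of_ord (@ord0 n) = 0. Proof. by []. Qed.

Ltac vsimp2 := repeat progress rewrite ?gcompE ?ext_lift ?val_pi1 ?val_pi2 ?lift0 ?cast_val ?val_rho' ?val_swap ?val_ord0.

Lemma pi2_0_gid n : pi2 0 n = gid n.
Proof. gstart2; vsimp2; fin. Qed.
Lemma pi2_lunit n : pi2 0 n = ext (@phi_lunit n).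
Proof. gstart2; vsimp2; fin. Qed.
Lemma pi1_runit n : pi1 n 0 = ext (@phi_runit n).
Proof. gstart2; vsimp2; fin. Qed.
Lemma ext_assoc1 m n : ext (@phi_assoc 1 m n) = gid (1 + m + n).
Proof. gstart2; vsimp2; fin. Qed.
Lemma rho0_pi1 p : @rho p.+1 ord0 = pi1 1 p.
Proof. gstart2; vsimp2; fin. Qed.
Lemma rhoS_pi2 p (j : 'I_p) : rho (lift ord0 j) = gcomp (rho j) (pi2 1 p).
Proof. gstart2; vsimp2; fin. Qed.

Lemma sym1 m n : pi2 m n = gcomp (pi1 n m) (ext (@phi_swap m n)).
Proof. gstart2; vsimp2; fin. Qed.
Lemma sym2 m n : pi1 m n = gcomp (pi2 n m) (ext (@phi_swap m n)).
Proof. gstart2; vsimp2; fin. Qed.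

Section FromSpecial.
Variable M : CartEqCat.
Variable Y : SpecialOb M.
Local Notation Ym := (sYmap Y).

Definition Gxi m n : Hom (Y (m + n)) (prd (Y m) (Y n)) := pair (Ym (pi1 m n)) (Ym (pi2 m n)).

Lemma Ycong m n (f g : GMap m n) : f = g -> Ym f = Ym g.
Proof. by move->. Qed.
Lemma Ycomp2 (c : M) l m n (f : GMap l m) (g : GMap m n) (h : Hom c (Y l)) :
  cmp (Ym g) (cmp (Ym f) h) = cmp (Ym (gcomp g f)) h.
Proof. by rewrite cmp_assoc sY_comp. Qed.

Ltac ysimp := repeat progress rewrite ?Ycomp2 -?sY_comp.

Lemma G_id n : Ym (ext (fun i : 'I_n => i)) = idm (Y n).
Proof. by rewrite ext_id sY_id. Qed.
Lemma G_comp l m n (f : 'I_l -> 'I_m) (g : 'I_m -> 'I_n) :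
  Ym (ext (g \o f)) = cmp (Ym (ext g)) (Ym (ext f)).
Proof. by rewrite ext_comp sY_comp. Qed.
Lemma G_nat m m' n n' (f : 'I_m -> 'I_m') (g : 'I_n -> 'I_n') :
  cmp (Gxi m' n') (Ym (ext (phi_sum f g))) = cmp (fprod (Ym (ext f)) (Ym (ext g))) (Gxi m n).
Proof. by rewrite /Gxi pair_cmp fprod_pair -!sY_comp pi1_nat pi2_nat. Qed.

Lemma G_coassoc l m n :
  cmp (assocM _ _ _) (cmp (fprod (Gxi l m) (idm _)) (Gxi (l + m) n))
  = cmp (fprod (idm _) (Gxi m n)) (cmp (Gxi l (m + n)) (Ym (ext (@phi_assoc l m n)))).
Proof.
rewrite /Gxi /assocM; pext; ysimp; apply: Ycong.
- exact: co1.
- exact: co2.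
- exact: co3.
Qed.

Lemma G_lunit n :
  cmp pr2 (cmp (fprod (bang (Y 0)) (idm _)) (Gxi 0 n)) = Ym (ext (@phi_lunit n)).
Proof. rewrite /Gxi; csimp; by rewrite pi2_lunit. Qed.
Lemma G_runit n :
  cmp pr1 (cmp (fprod (idm _) (bang (Y 0))) (Gxi n 0)) = Ym (ext (@phi_runit n)).
Proof. rewrite /Gxi; csimp; by rewrite pi1_runit. Qed.
Lemma G_sym m n : cmp (swapM _ _) (Gxi m n) = cmp (Gxi n m) (Ym (ext (@phi_swap m n))).
Proof.
rewrite /Gxi /swapM; pext; ysimp; apply: Ycong; [exact: sym1 | exact: sym2].
Qed.

Lemma G_bang : equiv (bang (Y 0)).
Proof. exact: (sY_special Y 0). Qed.

Lemma G_xi0 n : equiv (Gxi 0 n).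
Proof.
have e : cmp pr2 (Gxi 0 n) = idm (Y n) by rewrite /Gxi pair_pr2 pi2_0_gid sY_id.
apply: (@equiv_2of3_l _ _ _ _ _ pr2); first by rewrite e; exact: iso_equiv_id.
have -> : @pr2 M (Y 0) (Y n) = cmp pr2 (fprod (bang (Y 0)) (idm (Y n))) by rewrite pr2_fprod cmp_idl.
exact: equiv_comp (equiv_prod G_bang (iso_equiv_id _)) (equiv_iso (pr2_one_iso _)).
Qed.

Lemma G_xi1 p : equiv (Gxi 1 p).
Proof.
have e : tup (fun j : 'I_p.+1 => Ym (rho j))
   = cmp (fprod (idm (Y 1)) (tup (fun j : 'I_p => Ym (rho j)))) (Gxi 1 p).
  rewrite /Gxi fprod_pair cmp_idl -tup_cmp /= rho0_pi1; congr pair.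
  by congr tup; apply: functional_extensionality => j; rewrite -sY_comp rhoS_pi2.
apply: (@equiv_2of3_l _ _ _ _ _ (fprod (idm (Y 1)) (tup (fun j : 'I_p => Ym (rho j))))).
  by rewrite -e; exact: sY_special.
exact: equiv_prod (iso_equiv_id _) (sY_special Y p).
Qed.

Lemma G_equiv m n : equiv (Gxi m n).
Proof.
elim: m => [|m IH]; first exact: G_xi0.
have co := G_coassoc 1 m n.
rewrite ext_assoc1 sY_id cmp_idr in co.
apply: (@equiv_2of3_l _ _ _ _ _ (cmp (assocM _ _ _) (fprod (Gxi 1 m) (idm (Y n))))).
  rewrite -cmp_assoc co.
  exact: equiv_comp (G_xi1 (m + n)) (equiv_prod (iso_equiv_id _) IH).
exact: equiv_comp (equiv_prod (G_xi1 m) (iso_equiv_id _)) (equiv_iso (assoc_iso _ _ _)).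
Qed.

Definition Gob : HtyAlgOb M :=
  {| hX := sY Y; hXmap := fun m n f => Ym (ext f); hX_id := G_id; hX_comp := G_comp;
     xi := Gxi; xi0 := bang (Y 0); xi_nat := G_nat; xi_coassoc := G_coassoc;
     xi_lunit := G_lunit; xi_runit := G_runit; xi_sym := G_sym;
     xi_equiv := G_equiv; xi0_equiv := G_bang |}.

End FromSpecial.

Lemma val_lsh n (i : 'I_n) : nat_of_ord (@lsh n i) = i. Proof. by []. Qed.
Lemma compE' A B C (g : B -> C) (f : A -> B) x : (g \o f) x = g (f x). Proof. by []. Qed.
Ltac vsimp3 := repeat progress rewrite ?compE' ?gcompE ?ext_lift ?val_pi1 ?val_pi2 ?lift0 ?cast_val ?val_rho' ?val_swap ?val_ord0 ?val_fh ?val_lsh ?val_col.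

Lemma fh_ext m n (f : 'I_m -> 'I_n) : fh (ext f) =1 @lsh n \o f.
Proof. move=> i; apply: ord_inj; vsimp3; fin. Qed.
Lemma fh_pi1 m n : fh (pi1 m n) =1 @col m n.
Proof. move=> i; apply: ord_inj; vsimp3; have := ltn_ord i; fin. Qed.
Lemma fh_pi2 m n : fh (pi2 m n) =1 @col n m \o @phi_swap m n.
Proof. move=> i; apply: ord_inj; vsimp3; have := ltn_ord i; fin. Qed.
Lemma pi1_fh m n (f : GMap m n) : gcomp (pi1 n 1) (ext (fh f)) = f.
Proof. gstart2; vsimp3; have := ltn_ord (f (lift ord0 k)); fin. Qed.

Section Bij.
Variable M : CartEqCat.

Lemma Ymap_ext (X : HtyAlgOb M) m n (f : 'I_m -> 'I_n) : Ymap X (ext f) = hXmap X f.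
Proof.
rewrite /Ymap (Xext X (fh_ext f)) (hX_comp X f (@lsh n)) cmp_assoc r_lsh; exact: cmp_idl.
Qed.

Definition F0ob (X : HtyAlgOb M) : SpecialOb M :=
  {| sY := hX X; sYmap := @Ymap M X; sY_id := @Y_id M X; sY_comp := @Y_comp M X;
     sY_special := @Y_special M X |}.

Lemma xi_eq (X : HtyAlgOb M) m n : Gxi (F0ob X) m n = xi X m n.
Proof.
rewrite /Gxi /= /Ymap (Xext X (@fh_pi1 m n)) (Xext X (@fh_pi2 m n)) -P_col.
rewrite (hX_comp X (@phi_swap m n) (@col n m)) cmp_assoc -P_col -Q_swap PE.
by rewrite -pair_uniq.
Qed.

Lemma hty_eq (h : nat -> M)
  (m1 m2 : forall m n, ('I_m -> 'I_n) -> Hom (h m) (h n)) id1 id2 c1 c2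
  (x1 x2 : forall m n, Hom (h (m+n)) (prd (h m) (h n))) (z1 z2 : Hom (h 0) one)
  nat1 nat2 co1 co2 l1 l2 r1 r2 s1 s2 e1 e2 ez1 ez2 :
  m1 = m2 -> x1 = x2 -> z1 = z2 ->
  @Build_HtyAlgOb M h m1 id1 c1 x1 z1 nat1 co1 l1 r1 s1 e1 ez1
  = @Build_HtyAlgOb M h m2 id2 c2 x2 z2 nat2 co2 l2 r2 s2 e2 ez2.
Proof. move=> E1 E2 E3; subst; f_equal; apply: proof_irrelevance. Qed.

Lemma sp_eq (h : nat -> M) (m1 m2 : forall m n, GMap m n -> Hom (h m) (h n))
  id1 id2 c1 c2 s1 s2 :
  m1 = m2 -> @Build_SpecialOb M h m1 id1 c1 s1 = @Build_SpecialOb M h m2 id2 c2 s2.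
Proof. move=> E1; subst; f_equal; apply: proof_irrelevance. Qed.

Lemma G_F0 (X : HtyAlgOb M) : Gob (F0ob X) = X.
Proof.
have e1 := @Ymap_ext X; have e2 := @xi_eq X.
move: e1 e2; case: X => h hm hid hc x x0 hn hco hl hr hs he he0 /= e1 e2.
apply: hty_eq.
- apply: functional_extensionality_dep => m; apply: functional_extensionality_dep => n.
  apply: functional_extensionality => f; exact: e1.
- apply: functional_extensionality_dep => m; apply: functional_extensionality_dep => n.
  exact: e2.
- exact: (esym (bang_uniq x0)).
Qed.

Lemma F0_G (Y : SpecialOb M) : F0ob (Gob Y) = Y.
Proof.
case: Y => h hm hid hc hs; apply: sp_eq.
apply: functional_extensionality_dep => m; apply: functional_extensionality_dep => n.
apply: functional_extensionality => f.
rewrite /Ymap /r PE /= /Gxi pair_pr1 -hc; congr hm; exact: pi1_fh.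
Qed.

End Bij.

Section Homs.
Variable M : CartEqCat.
Variables X Y : HtyAlgOb M.

Lemma F1_nat (s : HtyAlgHom X Y) m n (f : GMap m n) :
  cmp (Ymap Y f) (s m) = cmp (s n) (Ymap X f).
Proof.
have rs : cmp (r Y n) (s (n+1)) = cmp (s n) (r X n).
  by rewrite /r !PE -cmp_assoc hsig_xi pr1_fprodC.
rewrite /Ymap -cmp_assoc (hsig_nat s) !cmp_assoc rs.
done.
Qed.

Definition F1 (s : HtyAlgHom X Y) : SpecialHom (F0ob X) (F0ob Y) :=
  @Build_SpecialHom M (F0ob X) (F0ob Y) (fun n => s n) (F1_nat s).

Lemma F1inv_nat (s : SpecialHom (F0ob X) (F0ob Y)) m n (f : 'I_m -> 'I_n) :
  cmp (hXmap Y f) (s m) = cmp (s n) (hXmap X f).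
Proof. rewrite -!Ymap_ext; exact: (ssig_nat s (ext f)). Qed.

Lemma F1inv_xi (s : SpecialHom (F0ob X) (F0ob Y)) m n :
  cmp (xi Y m n) (s (m + n)) = cmp (fprod (s m) (s n)) (xi X m n).
Proof.
rewrite -!xi_eq /Gxi pair_cmp fprod_pair.
by rewrite (ssig_nat s (pi1 m n)) (ssig_nat s (pi2 m n)).
Qed.

Lemma F1inv_xi0 (s : SpecialHom (F0ob X) (F0ob Y)) : cmp (xi0 Y) (s 0) = xi0 X.
Proof. by rewrite (bang_uniq (cmp _ _)) (bang_uniq (xi0 X)). Qed.

Definition F1inv (s : SpecialHom (F0ob X) (F0ob Y)) : HtyAlgHom X Y :=
  @Build_HtyAlgHom M X Y (fun n => s n) (F1inv_nat s) (F1inv_xi s) (F1inv_xi0 s).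

Lemma F1_bij : bijective F1.
Proof.
exists F1inv.
- case=> s p1 p2 p3; rewrite /F1inv /F1 /=; f_equal; apply: proof_irrelevance.
- case=> s p1; rewrite /F1inv /F1 /=; f_equal; apply: proof_irrelevance.
Qed.

End Homs.

Theorem corollary3p1p3 (M : CartEqCat) :
  exists (F0 : HtyAlgOb M -> SpecialOb M)
         (F1 : forall X Y : HtyAlgOb M, HtyAlgHom X Y -> SpecialHom (F0 X) (F0 Y)),
    [/\ (forall (X : HtyAlgOb M) (h : HtyAlgHom X X),
           (forall n, h n = idm (X n)) -> forall n, F1 X X h n = idm (F0 X n)),
        (forall (X Y Z : HtyAlgOb M) (f : HtyAlgHom X Y) (g : HtyAlgHom Y Z)
                (h : HtyAlgHom X Z),
           (forall n, h n = cmp (g n) (f n)) ->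
           forall n, F1 X Z h n = cmp (F1 Y Z g n) (F1 X Y f n)),
        bijective F0 &
        forall X Y : HtyAlgOb M, bijective (F1 X Y)].
Proof.
exists (@F0ob M), (@F1 M); split.
- move=> X h e n; exact: e n.
- move=> X Y Z f g h e n; exact: e n.
- exists (@Gob M); [exact: G_F0 | exact: F0_G].
- move=> X Y; exact: F1_bij.
Qed.
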